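(* For every $n\in\mathbb{N}$ and every $\pi\in\mathfrak{S}_n$, $\operatorname{EV}(\Theta(\pi))=\operatorname{Des}(\pi)$.
   Context: For a word $\pi=a_1\cdots a_n$ with distinct positive integer letters, $\operatorname{Des}(\pi)=\{i\in[n-1]:a_i>a_{i+1}\}$. The increasing unordered tree $T'(\pi)$ has root labeled $0$ and vertices $a_1,\dots,a_n$: if $b$ is a right-to-left minimum of $\pi$ then $b$ is a child of the root; otherwise $b$ is a child of the leftmost letter $a$ to the right of $b$ with $a<b$. $\operatorname{EV}(\pi)$ is the set of indices $1\le i\le n$ such that $a_i$ has even height in $T'(\pi)$ (root at height $0$). The complement $\pi^c=b_1\cdots b_n$ is the word on the same letters with $a_i<a_j\iff b_i>b_j$ for all $i<j$. $\Theta$ is defined recursively: the empty word maps to itself, and if $\pi=\sigma m\tau$ with $m$ the smallest letter, $\Theta(\pi)=\Theta(\sigma^c)\,m\,\Theta(\tau)$. *)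

(* Defs.v *)
(* Words = seq nat with distinct positive letters; positions are 1-indexed
   in Des / EV as in the paper (internally nth uses 0-indexing). *)
From mathcomp Require Import all_boot.
Set Implicit Arguments. Unset Strict Implicit. Unset Printing Implicit Defensive.

Definition Des (w : seq nat) : seq nat :=
  [seq i <- iota 1 (size w).-1 | nth 0 w i < nth 0 w i.-1].

(* Parent in T'(w) of the letter at 0-indexed position i:
   None = the root 0 (letter is a right-to-left minimum);
   Some j = the leftmost letter to the right of position i that is smaller. *)
Definition parent (w : seq nat) (i : nat) : option nat :=
  let b := nth 0 w i in
  let suf := drop i.+1 w in
  let k := find (fun a => a < b) suf in
  if k < size suf then Some (i.+1 + k) else None.

(* Height (root has height 0) of the vertex at 0-indexed position i;
   fuel suffices since parents strictly move right. *)
Fixpoint height_aux (fuel : nat) (w : seq nat) (i : nat) : nat :=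
  match fuel with
  | 0 => 0
  | f.+1 => match parent w i with
            | None => 1
            | Some j => (height_aux f w j).+1
            end
  end.

Definition height (w : seq nat) (i : nat) : nat := height_aux (size w) w i.

Definition EV (w : seq nat) : seq nat :=
  [seq i <- iota 1 (size w) | ~~ odd (height w i.-1)].

(* Complement: same letters, order-reversed: the r-th smallest letter
   is replaced by the r-th largest. *)
Definition compl (w : seq nat) : seq nat :=
  let L := sort leq w in
  map (fun a => nth 0 L ((size w).-1 - index a L)) w.

Fixpoint Theta_aux (fuel : nat) (w : seq nat) : seq nat :=
  match fuel with
  | 0 => [::]
  | f.+1 =>
    match w with
    | [::] => [::]
    | x :: s =>
      let m := foldr minn x s in
      let i := index m w in
      Theta_aux f (compl (take i w)) ++ m :: Theta_aux f (drop i.+1 w)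
    end
  end.

Definition Theta (w : seq nat) : seq nat := Theta_aux (size w) w.

(* Main.v *)
Require Import Defs.
From mathcomp Require Import all_boot.
From mathcomp Require Import zify.

Arguments parent : simpl never.

Lemma height_aux_S f w i : height_aux f.+1 w i =
  match parent w i with None => 1 | Some j => (height_aux f w j).+1 end.
Proof. by []. Qed.

Lemma foldr_minn_mem x s : foldr minn x s \in x :: s.
Proof.
elim: s => [|y s IH] /=; first by rewrite inE.
have [->|->] : minn y (foldr minn x s) = y \/ minn y (foldr minn x s) = foldr minn x s.
  by rewrite /minn; case: ltnP; auto.
  by rewrite !inE eqxx orbT.
move: IH; rewrite !inE => /orP [->//|->]; by rewrite !orbT.
Qed.

Lemma foldr_minn_le x s y : y \in x :: s -> foldr minn x s <= y.
Proof.
elim: s => [|z s IH] /=; first by rewrite inE => /eqP ->.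
rewrite !inE => /orP [Hx|/orP [Hz|Hs]].
- apply: leq_trans (geq_minr _ _) _; apply: IH; by rewrite inE Hx.
- by rewrite (eqP Hz) geq_minl.
- apply: leq_trans (geq_minr _ _) _; apply: IH; by rewrite inE Hs orbT.
Qed.

Lemma parent_lt w i j : parent w i = Some j -> i < j < size w.
Proof.
rewrite /parent; case: ifP => // h [<-]; move: h; rewrite size_drop => h.
apply/andP; split; lia.
Qed.

Lemma parent_left a m b i : (forall y, y \in a -> m < y) -> i < size a ->
  parent (a ++ m :: b) i = if parent a i is Some j then Some j else Some (size a).
Proof.
move=> Ha hi; rewrite /parent nth_cat hi.
have -> : drop i.+1 (a ++ m :: b) = drop i.+1 a ++ m :: b.
  rewrite drop_cat; case: ltnP => h //.
  have e : i.+1 = size a by lia.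
  by rewrite e subnn drop0 drop_size.
set p := (fun x => x < nth 0 a i).
rewrite find_cat -has_find.
case hh: (has p (drop i.+1 a)).
  move: hh; rewrite has_find => hh.
  by rewrite size_cat (leq_trans hh) ?leq_addr.
have pm : p m by rewrite /p; apply: Ha; apply: mem_nth.
rewrite /= pm addn0 size_cat /= -[X in X < _]addn0 ltn_add2l /= size_drop; by rewrite subnKC.
Qed.

Lemma parent_mid a m b : (forall y, y \in b -> m <= y) ->
  parent (a ++ m :: b) (size a) = None.
Proof.
move=> Hb; rewrite /parent nth_cat ltnn subnn /= drop_cat (_ : (size a).+1 < size a = false) ?subSnn /= ?drop0; last by rewrite ltnNge leqnSn.
rewrite -has_find; case: ifP => // /hasP [y yb]; rewrite ltnNge Hb //.
Qed.

Lemma parent_right a m b j :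
  parent (a ++ m :: b) ((size a).+1 + j) = omap (addn (size a).+1) (parent b j).
Proof.
rewrite /parent nth_cat drop_cat.
have -> : ((size a).+1 + j < size a) = false by lia.
have -> : ((size a).+1 + j).+1 < size a = false by lia.
have -> : (size a).+1 + j - size a = j.+1 by lia.
have -> : ((size a).+1 + j).+1 - size a = j.+2 by lia.
rewrite /=; case: ifP => //= _; congr Some; lia.
Qed.

Section Split.
Variables (a b : seq nat) (m : nat).
Hypothesis Ha : forall y, y \in a -> m < y.
Hypothesis Hb : forall y, y \in b -> m <= y.

Lemma hleft f i : i < size a -> height_aux f.+1 (a ++ m :: b) i = (height_aux f a i).+1.
Proof.
elim: f i => [|f IH] i hi.
  by rewrite height_aux_S parent_left //; case: (parent a i).
rewrite height_aux_S parent_left // [height_aux f.+1 a i]height_aux_S.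
case E: (parent a i) => [j|].
  have /andP [_ hj] := @parent_lt _ _ _ E; by rewrite IH.
by rewrite height_aux_S parent_mid.
Qed.

Lemma hright f j : height_aux f (a ++ m :: b) ((size a).+1 + j) = height_aux f b j.
Proof.
elim: f j => [|f IH] j //.
rewrite !height_aux_S parent_right; case: (parent b j) => [k|] //=.
by rewrite IH.
Qed.
End Split.

Lemma hstable f g w i : size w - i <= f -> 0 < f -> size w - i <= g -> 0 < g ->
  height_aux f w i = height_aux g w i.
Proof.
elim: f g i => [|f IH] [|g] i // h1 _ h2 _.
rewrite !height_aux_S; case E: (parent w i) => [j|] //.
have /andP [hij hj] := @parent_lt _ _ _ E.
congr S; apply: IH; lia.
Qed.

Section Split2.
Variables (a b : seq nat) (m : nat).
Hypothesis Ha : forall y, y \in a -> m < y.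
Hypothesis Hb : forall y, y \in b -> m <= y.

Lemma hL i : i < size a -> height (a ++ m :: b) i = (height a i).+1.
Proof.
move=> hi; rewrite /height size_cat /= addnS hleft //; congr S.
apply: hstable; lia.
Qed.

Lemma hM : height (a ++ m :: b) (size a) = 1.
Proof. by rewrite /height size_cat /= addnS height_aux_S parent_mid. Qed.

Lemma hR j : j < size b -> height (a ++ m :: b) ((size a).+1 + j) = height b j.
Proof.
move=> hj; rewrite /height hright //; apply: hstable; rewrite ?size_cat /=; lia.
Qed.
End Split2.

Lemma size_compl s : size (compl s) = size s.
Proof. by rewrite /compl size_map. Qed.

Lemma size_take_le k (s : seq nat) : size (take k s) <= k.
Proof. rewrite size_take; case: ifP => // /negbT; rewrite -leqNgt. done. Qed.

Lemma Theta_aux_cons f x s : Theta_aux f.+1 (x :: s) =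
  Theta_aux f (compl (take (index (foldr minn x s) (x :: s)) (x :: s))) ++
  foldr minn x s :: Theta_aux f (drop (index (foldr minn x s) (x :: s)).+1 (x :: s)).
Proof. by []. Qed.

Lemma Theta_aux_fuel f g w : size w <= f -> size w <= g -> Theta_aux f w = Theta_aux g w.
Proof.
elim: f g w => [|f IH] [|g] [|x s] // h1 h2.
rewrite !Theta_aux_cons.
have im : index (foldr minn x s) (x :: s) < (size s).+1 by rewrite index_mem foldr_minn_mem.
have st := size_take_le (index (foldr minn x s) (x :: s)) (x :: s).
move: im st; move: (index (foldr minn x s) (x :: s)) => k im st.
move: h1 h2 => /= h1 h2.
congr (_ ++ _ :: _); apply: IH; rewrite ?size_compl ?size_drop /=; lia.
Qed.

Lemma ThetaE x s : Theta (x :: s) =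
  Theta (compl (take (index (foldr minn x s) (x :: s)) (x :: s))) ++
  foldr minn x s :: Theta (drop (index (foldr minn x s) (x :: s)).+1 (x :: s)).
Proof.
rewrite {1}/Theta [size (x :: s)]/= Theta_aux_cons.
have im : index (foldr minn x s) (x :: s) < (size s).+1 by rewrite index_mem foldr_minn_mem.
have st := size_take_le (index (foldr minn x s) (x :: s)) (x :: s).
move: im st; move: (index (foldr minn x s) (x :: s)) => k im st.
rewrite /Theta; congr (_ ++ _ :: _); apply: Theta_aux_fuel;
  rewrite ?size_compl ?size_drop /=; lia.
Qed.

Lemma size_Theta w : size (Theta w) = size w.
Proof.
move: {2}(size w) (leqnn (size w)) => n; elim: n w => [|n IH] [|x s] // hs.
rewrite ThetaE.
have im : index (foldr minn x s) (x :: s) < (size s).+1 by rewrite index_mem foldr_minn_mem.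
move: im; move: (index (foldr minn x s) (x :: s)) => k im.
move: hs => /= hs.
have st : size (take k (x :: s)) = k by rewrite size_take /= im.
rewrite size_cat /= !IH ?size_compl ?st ?size_drop /=; lia.
Qed.

Definition des (w : seq nat) (i : nat) := (i.+1 < size w) && (nth 0 w i.+1 < nth 0 w i).
Arguments des : simpl never.

Lemma sorted_nth_lt (L : seq nat) p q : sorted ltn L -> p < size L -> q < size L ->
  (nth 0 L p < nth 0 L q) = (p < q).
Proof.
move=> sL hp hq; case: (ltngtP p q) => h.
- by apply: (sorted_ltn_nth ltn_trans) => //; rewrite inE.
- by rewrite ltnNge ltnW //; apply: (sorted_ltn_nth ltn_trans) => //; rewrite inE.
- by rewrite h ltnn.
Qed.

Lemma compl_nth (s : seq nat) i j : uniq s -> i < size s -> j < size s ->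
  (nth 0 (compl s) i < nth 0 (compl s) j) = (nth 0 s j < nth 0 s i).
Proof.
move=> us hi hj; rewrite /compl !(nth_map 0) //.
set L := sort leq s.
have sL : sorted ltn L.
  by rewrite ltn_sorted_uniq_leq sort_uniq us sort_sorted //; exact: leq_total.
have szL : size L = size s by rewrite size_sort.
have mi : nth 0 s i \in L by rewrite mem_sort mem_nth.
have mj : nth 0 s j \in L by rewrite mem_sort mem_nth.
have hx : index (nth 0 s i) L < size L by rewrite index_mem.
have hy : index (nth 0 s j) L < size L by rewrite index_mem.
have -> : (nth 0 s j < nth 0 s i) = (index (nth 0 s j) L < index (nth 0 s i) L).
  by rewrite -(@sorted_nth_lt _ _ _ sL hy hx) !nth_index.
rewrite sorted_nth_lt //; rewrite szL in hx hy *; try lia.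
Qed.

Lemma compl_uniq s : uniq s -> uniq (compl s).
Proof.
move=> us; apply/(uniqP 0) => i j; rewrite !inE size_compl => hi hj e.
case: (ltngtP (nth 0 s i) (nth 0 s j)) => h.
- by move: (@compl_nth _ _ _ us hj hi); rewrite h e ltnn.
- by move: (@compl_nth _ _ _ us hi hj); rewrite h e ltnn.
- by apply/eqP; rewrite -(nth_uniq 0 hi hj us) h.
Qed.

Lemma mem_compl s y : y \in compl s -> y \in s.
Proof.
rewrite /compl => /mapP [x xs ->]; rewrite -(mem_sort leq); apply: mem_nth.
have : 0 < size s by case: (s) xs.
by rewrite size_sort; case: (size s) => [//|N] _ /=; rewrite ltnS leq_subr.
Qed.

Lemma mem_Theta w y : y \in Theta w -> y \in w.
Proof.
move: {2}(size w) (leqnn (size w)) => n; elim: n w y => [|n IH] [|x s] y // hs.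
rewrite ThetaE.
have im : index (foldr minn x s) (x :: s) < (size s).+1 by rewrite index_mem foldr_minn_mem.
move: im; move: (index (foldr minn x s) (x :: s)) => k im.
move: hs => /= hs.
have st : size (take k (x :: s)) = k by rewrite size_take /= im.
rewrite mem_cat inE => /orP [|/orP [/eqP -> | ]].
- move=> h; have := IH _ _ _ h; rewrite ?size_compl ?st.
  by move=> /(_ ltac:(lia))/mem_compl/mem_take.
- exact: foldr_minn_mem.
- move=> h; have := IH _ _ _ h; rewrite ?size_drop /=.
  move=> /(_ ltac:(lia))/mem_drop ys; by rewrite inE ys orbT.
Qed.

Section DesSplit.
Variables (a b : seq nat) (m : nat).
Hypothesis Ha : forall y, y \in a -> m < y.
Hypothesis Hb : forall y, y \in b -> m <= y.

Lemma dL i : i.+1 < size a -> des (a ++ m :: b) i = des a i.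
Proof.
move=> hi; rewrite /des size_cat !nth_cat hi (ltnW hi) (ltn_addr _ hi).
by [].
Qed.

Lemma dA i : i.+1 = size a -> des (a ++ m :: b) i = true.
Proof.
move=> hi; rewrite /des size_cat !nth_cat -hi ltnn subnn ltnSn /=.
have -> : i.+1 < i.+1 + (size b).+1 by lia.
rewrite /=; apply: Ha; apply: mem_nth; by rewrite -hi ltnSn.
Qed.

Lemma dM : des (a ++ m :: b) (size a) = false.
Proof.
rewrite /des size_cat !nth_cat ltnn subnn (_ : (size a).+1 < size a = false); last by lia.
rewrite subSnn /=; case: b Hb => [|y b'] Hb' /=; first by rewrite addn1 ltnn.
have := Hb' y; rewrite inE eqxx => /(_ isT) hy; by rewrite [y < m]ltnNge hy andbF.
Qed.

Lemma dR j : des (a ++ m :: b) ((size a).+1 + j) = des b j.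
Proof.
rewrite /des size_cat !nth_cat.
have -> : ((size a).+1 + j).+1 < size a = false by lia.
have -> : ((size a).+1 + j) < size a = false by lia.
have -> : ((size a).+1 + j).+1 - size a = j.+2 by lia.
have -> : ((size a).+1 + j) - size a = j.+1 by lia.
have -> : (((size a).+1 + j).+1 < size a + (size b).+1) = (j.+1 < size b).
  by apply/idP/idP; lia.
by [].
Qed.

Variables (al be : seq nat).
Hypothesis Hal : forall y, y \in al -> m < y.
Hypothesis Hbe : forall y, y \in be -> m <= y.
Hypothesis sal : size al = size a.
Hypothesis sbe : size be = size b.
Hypothesis ua : uniq a.
Hypothesis IHal : forall i, i < size a -> ~~ odd (height al i) = des (compl a) i.
Hypothesis IHbe : forall j, j < size b -> ~~ odd (height be j) = des b j.

Lemma split_main i : i < size a + (size b).+1 ->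
  ~~ odd (height (al ++ m :: be) i) = des (a ++ m :: b) i.
Proof.
move=> hi; case: (ltngtP i (size a)) => h.
- rewrite (@hL al be m Hal Hbe) ?sal // /= negbK.
  rewrite -[odd _]negbK IHal //.
  case: (ltngtP i.+1 (size a)) => h2.
  + rewrite dL // /des size_compl h2 compl_nth // /=.
    have ne : nth 0 a i != nth 0 a i.+1.
      by rewrite (nth_uniq 0 (ltnW h2) h2 ua); apply/eqP; lia.
    by rewrite -leqNgt leq_eqVlt eq_sym (negbTE ne).
  + lia.
  + by rewrite dA // /des size_compl h2 ltnn.
- have hj : i - (size a).+1 < size b by lia.
  have e : i = (size al).+1 + (i - (size a).+1) by lia.
  rewrite [in LHS]e (@hR al be m (i - (size a).+1) ltac:(by rewrite sbe)).
  have e2 : i = (size a).+1 + (i - (size a).+1) by lia.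
  by rewrite [in RHS]e2 dR IHbe.
- by rewrite h -{1}sal (@hM al be m Hbe) dM.
Qed.
End DesSplit.

Lemma main n (w : seq nat) : size w <= n -> uniq w -> forall i, i < size w ->
  ~~ odd (height (Theta w) i) = des w i.
Proof.
elim: n w => [|n IH] [|x s] // hs uw i hi.
rewrite ThetaE.
have mw := foldr_minn_mem x s.
have mle := @foldr_minn_le x s.
move: mw mle; move: (foldr minn x s) => m mw mle.
have im : index m (x :: s) < size (x :: s) by rewrite index_mem.
set k := index m (x :: s) in im *.
have Ew : x :: s = take k (x :: s) ++ m :: drop k.+1 (x :: s).
  by rewrite -{1}(cat_take_drop k (x :: s)) (drop_nth m im) nth_index.
have mNa : m \notin take k (x :: s).
  apply/negP => ma.
  have := index_cat m (take k (x :: s)) (drop k (x :: s)).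
  rewrite cat_take_drop ma -/k => e.
  have := index_mem m (take k (x :: s)); rewrite ma -e size_take im /k ltnn.
  by [].
have Ha : forall y, y \in take k (x :: s) -> m < y.
  move=> y ya; rewrite ltn_neqAle mle ?(mem_take ya) // andbT.
  by apply/eqP => ey; move: mNa; rewrite ey ya.
have Hb : forall y, y \in drop k.+1 (x :: s) -> m <= y.
  by move=> y yb; apply: mle; apply: mem_drop yb.
have ua : uniq (take k (x :: s)) by apply: take_uniq.
have ub : uniq (drop k.+1 (x :: s)) by apply: drop_uniq.
have sa : size (take k (x :: s)) = k by rewrite size_take im.
have szw : size (x :: s) = size (take k (x :: s)) + (size (drop k.+1 (x :: s))).+1.
  by rewrite {1}Ew size_cat.
move: Ha Hb ua ub sa szw; rewrite [in des _ _]Ew.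
move: (take k (x :: s)) (drop k.+1 (x :: s)) => a b Ha Hb ua ub sa szw.
rewrite szw in hs hi.
have hsb : size b <= n by lia.
have hsa : size (compl a) <= n by rewrite size_compl; lia.
apply: split_main => //.
- by move=> y /mem_Theta/mem_compl/Ha.
- by move=> y /mem_Theta/Hb.
- by rewrite size_Theta size_compl.
- by rewrite size_Theta.
- move=> j hj; exact: (IH _ hsa (compl_uniq _ ua) j ltac:(by rewrite size_compl)).
- move=> j hj; exact: (IH _ hsb ub j hj).
Qed.

Theorem theorem8p1 (n : nat) (pi : seq nat) :
  perm_eq pi (iota 1 n) -> EV (Theta pi) = Des pi.
Proof.
move=> hp.
have uw : uniq pi by rewrite (perm_uniq hp) iota_uniq.
rewrite /EV /Des size_Theta.
case E: (size pi) => [|N] //.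
transitivity [seq i <- iota 1 N.+1 | des pi i.-1].
  apply: eq_in_filter => i; rewrite mem_iota => /andP [h1 h2].
  apply: (@main _ pi (leqnn _) uw); rewrite E; lia.
rewrite -[N.+1]addn1 iotaD filter_cat /= {2}/des E.
rewrite (_ : (1 + N).-1.+1 < N.+1 = false) /=; last by apply/negbTE; lia.
rewrite cats0 addn1 /=; apply: eq_in_filter => i; rewrite mem_iota => /andP [h1 h2].
rewrite /des E prednK //; rewrite (_ : i < N.+1) //; lia.
Qed.
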